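(* The formal power series $f$ and $g$ satisfy $$f(x;u,v,w)=\frac{x-2x^2-wx^3}{1-x}+xg(x;uv,w)+xf(x;1,v,w)+\Big(wx^2+\frac{uvwx}{1-uv}\Big)f(x;1,uv,w)-\frac{u^2v^2wx}{1-uv}f(x;1,1,uvw)$$ and $$(1-x)g(x;v,w)=\frac{x-x^2-wx^3}{1-x}+\Big(wx^2+\frac{vwx}{1-v}\Big)f(x;1,v,w)-\frac{v^2wx}{1-v}f(x;1,1,vw).$$
   Context: An ascent sequence of length $n$ is a sequence $x_1\cdots x_n$ of non-negative integers with $x_1=0$ and $x_i\le \mathrm{asc}(x_1\cdots x_{i-1})+1$ for $1<i\le n$, where $\mathrm{asc}$ counts ascents (indices $j$ with $x_j<x_{j+1}$). It avoids $021$ if there are no $i<j<k$ with $x_i<x_k<x_j$. For $n\ge1$, $0\le s\le r\le m<n$, let $a_{n,m,r,s}$ be the number of $021$-avoiding ascent sequences of length $n$ with exactly $m$ ascents, largest letter $r$ and last letter $s$. Let $A_{n,m}(u,v)=\sum_{r=0}^m\sum_{s=0}^r a_{n,m,r,s}u^sv^r$ and $B_{n,m}(v)=\sum_{r=0}^m a_{n,m,r,r}v^r$; $A_n(u,v,w)=\sum_{m=0}^{n-1}A_{n,m}(u,v)w^m$, $B_n(v,w)=\sum_{m=0}^{n-1}B_{n,m}(v)w^m$; and $f(x;u,v,w)=\sum_{n\ge1}A_n(u,v,w)x^n$, $g(x;v,w)=\sum_{n\ge1}B_n(v,w)x^n$. Thus in $f$, $x$ marks length, $u$ the last letter, $v$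 the largest letter, $w$ the number of ascents. *)

(* Defs.v *)
From HB Require Import structures.
From mathcomp Require Import all_boot all_order all_algebra.
Set Implicit Arguments. Unset Strict Implicit. Unset Printing Implicit Defensive.
Import GRing.Theory.

Definition asc (s : seq nat) : nat :=
  count (fun p : nat * nat => p.1 < p.2) (zip s (behead s)).

(* ascent sequence: nonempty, x_1 = 0, and x_i <= asc(x_1..x_{i-1}) + 1 for 1 < i <= n
   (0-based: for 0 < i < size s, nth s i <= asc (take i s) + 1) *)
Definition is_ascent (s : seq nat) : bool :=
  (head 1 s == 0) &&
  [forall i : 'I_(size s), (0 < i) ==> (nth 0 s i <= (asc (take i s)).+1)].

Definition avoids021 (s : seq nat) : bool :=
  [forall i : 'I_(size s), forall j : 'I_(size s), forall k : 'I_(size s),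
     ~~ [&& i < j, j < k, nth 0 s i < nth 0 s k & nth 0 s k < nth 0 s j]].

Definition maxletter (s : seq nat) : nat := foldr maxn 0 s.
Definition lastletter (s : seq nat) : nat := last 0 s.

(* Every ascent sequence of length n has all entries < n, so enumerating
   n-tuples over 'I_n enumerates all ascent sequences of length n. *)
Definition seq_of n (t : n.-tuple 'I_n) : seq nat := map val t.

Local Open Scope ring_scope.

Definition Acoef (R : comRingType) (n : nat) (u v w : R) : R :=
  \sum_(t : n.-tuple 'I_n | is_ascent (seq_of t) && avoids021 (seq_of t))
     u ^+ lastletter (seq_of t) * v ^+ maxletter (seq_of t) * w ^+ asc (seq_of t).

Definition Bcoef (R : comRingType) (n : nat) (v w : R) : R :=
  \sum_(t : n.-tuple 'I_n | [&& is_ascent (seq_of t), avoids021 (seq_of t)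
                              & lastletter (seq_of t) == maxletter (seq_of t)])
     v ^+ maxletter (seq_of t) * w ^+ asc (seq_of t).

Definition pser (R : comRingType) := nat -> R.

Definition ps_add (R : comRingType) (F G : pser R) : pser R := fun n => F n + G n.
Definition ps_scale (R : comRingType) (c : R) (F : pser R) : pser R := fun n => c * F n.
Definition ps_mul (R : comRingType) (F G : pser R) : pser R :=
  fun n => \sum_(i < n.+1) F i * G (n - i)%N.
Definition ps_mono (R : comRingType) (c : R) (k : nat) : pser R :=
  fun n => if n == k then c else 0.
Definition ps_inv1mx (R : comRingType) : pser R := fun _ => 1.
Definition ps_1mx (R : comRingType) : pser R := ps_add (ps_mono 1 0) (ps_mono (-1) 1).

(* f(x;u,v,w) = sum_{n>=1} A_n(u,v,w) x^n ; g(x;v,w) = sum_{n>=1} B_n(v,w) x^n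
   (the coefficient of x^0 is 0: there is no ascent sequence of length 0) *)
Definition fser (R : comRingType) (u v w : R) : pser R :=
  fun n => if n is 0 then 0 else Acoef n u v w.
Definition gser (R : comRingType) (v w : R) : pser R :=
  fun n => if n is 0 then 0 else Bcoef n v w.

(* Main.v *)
Require Import Defs.
From mathcomp Require Import all_boot all_order all_algebra.
From mathcomp Require Import zify ring lra.
Import GRing.Theory.
Set Implicit Arguments. Unset Strict Implicit. Unset Printing Implicit Defensive.

Lemma max_rcons s x : maxletter (rcons s x) = maxn (maxletter s) x.
Proof. rewrite /maxletter; elim: s => [|a s IH] /=; [by rewrite maxn0 max0n | by rewrite IH maxnA]. Qed.

Lemma in_max s y : y \in s -> y <= maxletter s.
Proof. rewrite /maxletter; elim: s => [|a s IH] //=; rewrite inE => /orP [/eqP->|/IH]; lia. Qed.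

Lemma max_has s x : x < maxletter s -> exists2 y, y \in s & x < y.
Proof.
rewrite /maxletter; elim: s => [|a s IH] //= H.
case: (ltnP x a) => Hxa; first by exists a; rewrite ?inE ?eqxx.
have [y ys xy]: exists2 y, y \in s & x < y by apply: IH; lia.
by exists y; rewrite // inE ys orbT.
Qed.

Lemma zip_behead_rcons (a : nat) t x :
  zip (rcons (a :: t) x) (behead (rcons (a :: t) x)) =
  rcons (zip (a :: t) (behead (a :: t))) (last a t, x).
Proof.
elim: t a => [|b t IH] a //=.
by rewrite -IH.
Qed.

Lemma asc_rcons s x : s != [::] -> asc (rcons s x) = asc s + (lastletter s < x).
Proof.
case: s => [|a t] // _; rewrite /asc zip_behead_rcons -cats1 count_cat /=.
by rewrite /lastletter /= addn0.
Qed.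

Lemma last_rcons' s x : lastletter (rcons s x) = x.
Proof. by rewrite /lastletter last_rcons. Qed.

Lemma take_rcons' (s : seq nat) x i : i <= size s -> take i (rcons s x) = take i s.
Proof. by move=> H; rewrite -cats1 takel_cat. Qed.

Lemma ascP s : is_ascent s <->
  (head 1 s = 0 /\ forall i, 0 < i -> i < size s -> nth 0 s i <= (asc (take i s)).+1).
Proof.
rewrite /is_ascent; split.
  case/andP=> /eqP H0 /forallP H; split=> // i Hi Hs.
  by have /implyP := H (Ordinal Hs); apply.
case=> H0 H; apply/andP; split; first by rewrite H0.
by apply/forallP=> i; apply/implyP=> Hi; apply: H.
Qed.

Lemma avP s : avoids021 s <->
  (forall i j k, i < j -> j < k -> k < size s ->
     ~~ ((nth 0 s i < nth 0 s k) && (nth 0 s k < nth 0 s j))).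
Proof.
rewrite /avoids021; split.
  move=> /forallP H i j k ij jk ks.
  have is' : i < size s by lia.
  have js : j < size s by lia.
  have := forallP (forallP (H (Ordinal is')) (Ordinal js)) (Ordinal ks).
  by rewrite /= ij jk.
move=> H; apply/forallP=> i; apply/forallP=> j; apply/forallP=> k.
apply/negP; case/and4P=> ij jk a b.
by have := H i j k ij jk (ltn_ord k); rewrite a b.
Qed.

Definition valid s := is_ascent s && avoids021 s.
Definition cond s x := (x == 0) || (maxletter s <= x <= (asc s).+1).

Lemma valid_rcons s x : s != [::] -> valid (rcons s x) = valid s && cond s x.
Proof.
move=> sn.
have hd : head 1 (rcons s x) = head 1 s by case: s sn.
have sz : size (rcons s x) = (size s).+1 by rewrite size_rcons.
have s0 : 0 < size s by case: (s) sn.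
rewrite /valid /cond; apply/idP/idP.
  case/andP=> /ascP [H0 HA] /avP HV.
  have Hx : x <= (asc s).+1.
    have := HA (size s) s0; rewrite sz ltnSn nth_rcons ltnn eqxx take_rcons' //.
    by rewrite take_size => /(_ isT).
  have Hc : (x == 0) || (maxletter s <= x <= (asc s).+1).
    case: eqP => //= /eqP xn0; rewrite Hx andbT leqNgt; apply/negP => /max_has [y ys xy].
    set j := index y s.
    have js : j < size s by rewrite index_mem.
    have nj : nth 0 s j = y by rewrite nth_index.
    have hs0 : nth 0 s 0 = 0 by move: H0; rewrite hd; case: (s) => //= a t ->.
    have j0 : 0 < j by rewrite lt0n; apply/eqP => j0; move: nj; rewrite j0 hs0; lia.
    have := HV 0 j (size s) j0 js; rewrite sz ltnSn !nth_rcons s0 js ltnn eqxx nj hs0.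
    rewrite xy andbT; lia.
  rewrite Hc andbT; apply/andP; split.
    apply/ascP; split; first by rewrite -hd.
    move=> i i0 is'; have := HA i i0; rewrite sz nth_rcons is' take_rcons' ?(ltnW is') //.
    by move=> H; apply: H; exact: ltnW.
  apply/avP => i j k ij jk ks.
  have := HV i j k ij jk; rewrite sz !nth_rcons ks.
  have -> : j < size s by apply: ltn_trans jk ks.
  have -> : i < size s by apply: ltn_trans ij (ltn_trans jk ks).
  by apply; apply: ltnW.
case/andP => /andP [/ascP [H0 HA] /avP HV] Hc.
apply/andP; split.
  apply/ascP; split; first by rewrite hd.
  move=> i i0; rewrite sz ltnS leq_eqVlt => /orP [/eqP ->|is'].
    rewrite nth_rcons ltnn eqxx take_rcons' // take_size.
    by case/orP: Hc => [/eqP ->|/andP[]].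
  by rewrite nth_rcons is' take_rcons' ?(ltnW is') //; apply: HA.
apply/avP => i j k ij jk; rewrite sz ltnS leq_eqVlt => /orP [/eqP ke|ks].
  have is' : i < size s by lia.
  have js : j < size s by lia.
  rewrite !nth_rcons is' js ke ltnn eqxx.
  case/orP: Hc => [/eqP ->|/andP [Hm _]]; first by rewrite ltn0.
  apply/negP => /andP [_ h]; have := leq_trans h (in_max (mem_nth 0 js)); by rewrite ltnNge Hm.
have is' : i < size s by lia.
have js : j < size s by lia.
by rewrite !nth_rcons is' js ks; apply: HV.
Qed.

Definition allowed (s : seq nat) : seq nat :=
  0 :: iota (maxn (maxletter s) 1) ((asc s).+2 - maxn (maxletter s) 1).

Fixpoint Wl k : seq (seq nat) :=
  if k is k'.+1 then [seq rcons s x | s <- Wl k', x <- allowed s] else [:: [:: 0]].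

Lemma WlS k : Wl k.+1 = [seq rcons s x | s <- Wl k, x <- allowed s].
Proof. by []. Qed.

Definition winv k (s : seq nat) :=
  [/\ size s = k.+1, asc s <= k, maxletter s <= asc s,
      (lastletter s == maxletter s) || (lastletter s == 0) &
      (maxletter s == 0) ==> (asc s == 0)].

Lemma mem_allowed s x : maxletter s <= asc s ->
  (x \in allowed s) = (x == 0) || (maxletter s <= x <= (asc s).+1).
Proof.
move=> H; rewrite /allowed inE mem_iota.
case: eqP => //= /eqP xn.
apply/idP/idP; lia.
Qed.

Lemma inv_rcons k s x : winv k s -> x \in allowed s -> winv k.+1 (rcons s x).
Proof.
case=> H1 H2 H3 H4 H5; rewrite mem_allowed // => Hx.
have sn : s != [::] by case: (s) H1.
rewrite /winv size_rcons H1 asc_rcons // max_rcons last_rcons'.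
move: H4 H5 Hx; set l := lastletter s; set r := maxletter s; set m := asc s.
move=> H4 H5 Hx.
split => //; try lia.
Qed.

Lemma Wl_inv k s : s \in Wl k -> winv k s.
Proof.
elim: k s => [|k IH] s.
  by rewrite /= inE => /eqP ->.
rewrite WlS.
case/(@allpairsPdep _ (fun=> nat)) => s0 [x [s0in xin ->]].
exact: inv_rcons (IH _ s0in) xin.
Qed.

Lemma valid0 : valid [:: 0].
Proof.
apply/andP; split; first by apply/ascP; split => // i i0 /=; lia.
by apply/avP => i j k ij jk /=; lia.
Qed.

Lemma Wl_mem k s : (s \in Wl k) = (size s == k.+1) && valid s.
Proof.
elim: k s => [|k IH] s.
  rewrite /= inE; apply/idP/idP; first by move/eqP->; rewrite valid0.
  case: s => [|a [|b t]] // /andP [_ /andP [/ascP [H0 _] _]].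
  by move: H0 => /= ->.
rewrite WlS; apply/idP/idP.
  case/(@allpairsPdep _ (fun=> nat)) => s0 [x [s0in xin ->]].
  have [H1 H2 H3 H4 H5] := Wl_inv s0in.
  have sn : s0 != [::] by case: (s0) H1.
  rewrite size_rcons H1 eqxx /= valid_rcons //.
  move: s0in; rewrite IH => /andP [_ ->] /=.
  by rewrite /cond -mem_allowed.
case/lastP: s => [|s x] //; rewrite size_rcons eqSS.
case/andP => sz.
have sn : s != [::] by case: (s) sz.
rewrite valid_rcons // => /andP [vs cx].
have sin : s \in Wl k by rewrite IH sz.
have [H1 H2 H3 H4 H5] := Wl_inv sin.
apply/(@allpairsPdep _ (fun=> nat)); exists s, x; split => //.
by rewrite mem_allowed.
Qed.

Lemma Wl_uniq k : uniq (Wl k).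
Proof.
elim: k => [|k IH] //.
rewrite WlS; apply: allpairs_uniq_dep => //.
  move=> s _; rewrite /allowed /= iota_uniq andbT mem_iota; lia.
move=> [s1 x1] [s2 x2] _ _ /= /rcons_inj [-> ->] //.
Qed.

Local Open Scope ring_scope.

Lemma tuple_sum (R : comRingType) k (G : seq nat -> R) :
  \sum_(t : k.+1.-tuple 'I_k.+1 | valid (seq_of t)) G (seq_of t) = \sum_(s <- Wl k) G s.
Proof.
transitivity (\sum_(s <- map (@seq_of k.+1) [seq t <- index_enum (k.+1.-tuple 'I_k.+1) | valid (seq_of t)]) G s).
  by rewrite big_map big_filter.
apply: perm_big; apply: uniq_perm.
- rewrite map_inj_uniq ?filter_uniq ?index_enum_uniq //.
  move=> t1 t2 /(inj_map val_inj) H; exact: val_inj.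
- exact: Wl_uniq.
move=> s; rewrite Wl_mem; apply/mapP/idP.
  case=> t; rewrite mem_filter => /andP [vt _] ->.
  by rewrite vt andbT /seq_of size_map size_tuple.
case/andP=> /eqP sz vs.
have sin : s \in Wl k by rewrite Wl_mem sz eqxx.
have [H1 H2 H3 H4 H5] := Wl_inv sin.
have sz' : size (map (@inord k) s) == k.+1 by rewrite size_map sz.
exists (Tuple sz').
  by rewrite mem_filter mem_index_enum andbT /seq_of /= -map_comp map_id_in //= => y ys /=; rewrite inordK //; have := in_max ys; lia.
by rewrite /seq_of /= -map_comp map_id_in //= => y ys /=; rewrite inordK //; have := in_max ys; lia.
Qed.

Section Alg.
Variable R : comNzRingType.

Lemma geo (q C : R) a c :
  (1 - q) * \sum_(x <- iota a c) q ^+ x * C = (q ^+ a - q ^+ (a + c)) * C.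
Proof.
elim: c a => [|c IH] a; first by rewrite big_nil addn0 subrr mulr0 mul0r.
rewrite /= big_cons mulrDr IH addSnnS exprS; ring.
Qed.

Definition wt (u v w : R) s := u ^+ lastletter s * v ^+ maxletter s * w ^+ asc s.
Definition bwt (v w : R) s := if lastletter s == maxletter s then v ^+ maxletter s * w ^+ asc s else 0.
Definition zt s : R := if maxletter s == 0 then 1 else 0.

Lemma key k s (q w : R) : winv k s ->
  (1 - q) * \sum_(x <- iota (maxn (maxletter s) 1) ((asc s).+2 - maxn (maxletter s) 1))
     q ^+ x * w ^+ (asc s + (lastletter s < x)) =
  (1 - q) * ((1 - w) * bwt q w s - zt s) + w * wt 1 q w s - q ^+ 2 * w * wt 1 1 (q * w) s.
Proof.
case=> _ _ H3 H4 H5; rewrite /bwt /zt /wt expr1n !mul1r.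
move: H3 H4 H5; set l := lastletter s; set r := maxletter s; set m := asc s => H3 H4 H5.
case: (posnP r) => r0.
  have m0 : m = 0 by move: H5; rewrite r0 eqxx /=; move/eqP.
  have l0 : l = 0 by move: H4; rewrite r0 orbb => /eqP.
  rewrite r0 m0 l0 /= big_cons big_nil /=; ring.
have -> : maxn r 1 = r by lia.
case: (eqVneq l r) => lr.
  have -> : (m.+2 - r = (m.+1 - r).+1)%N by lia.
  rewrite /= big_cons lr ltnn addn0.
  rewrite (eq_big_seq (fun x => q ^+ x * w ^+ m.+1)); last first.
    by move=> x; rewrite mem_iota => /andP [h _]; rewrite h addn1.
  rewrite mulrDr geo ?eqxx.
  have -> : (r.+1 + (m.+1 - r) = m.+2)%N by lia.
  rewrite ?expr1n ?mul1r !exprS exprMn; ring.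
have l0 : l = 0 by move: H4; rewrite (negbTE lr) => /eqP.
rewrite (eq_big_seq (fun x => q ^+ x * w ^+ m.+1)); last first.
  by move=> x; rewrite mem_iota => /andP [h _]; rewrite l0 (_ : (0 < x)%N = true) ?addn1 //; lia.
rewrite geo.
have -> : (r + (m.+2 - r) = m.+2)%N by lia.

rewrite ?expr1n ?mul1r !exprS exprMn; ring.
Qed.

Lemma winv_ne k s : winv k s -> s != [::].
Proof. by case; case: s. Qed.

Lemma S1 k s (u v w : R) : winv k s ->
  (1 - u * v) * \sum_(x <- allowed s) wt u v w (rcons s x) =
  (1 - u * v) * (wt 1 v w s + (1 - w) * bwt (u * v) w s - zt s) + w * wt 1 (u * v) w s
   - (u * v) ^+ 2 * w * wt 1 1 (u * v * w) s.
Proof.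
move=> Hi; have sn := winv_ne Hi.
rewrite /allowed big_cons.
rewrite (eq_big_seq (fun x => (u * v) ^+ x * w ^+ (asc s + (lastletter s < x)%N))); last first.
  move=> x; rewrite mem_iota => /andP [h _].
  rewrite /wt last_rcons' max_rcons asc_rcons // exprMn.
  by rewrite (_ : maxn (maxletter s) x = x) //; lia.
rewrite mulrDr (key _ _ Hi).
rewrite {1}/wt last_rcons' max_rcons asc_rcons // maxn0 ltn0 addn0 expr0 mul1r.
rewrite /wt expr1n !mul1r; ring.
Qed.

Lemma S2 k s (v w : R) : winv k s ->
  (1 - v) * \sum_(x <- allowed s) bwt v w (rcons s x) =
  (1 - v) * ((1 - w) * bwt v w s) + w * wt 1 v w s - v ^+ 2 * w * wt 1 1 (v * w) s.
Proof.
move=> Hi; have sn := winv_ne Hi.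
rewrite /allowed big_cons.
rewrite (eq_big_seq (fun x => v ^+ x * w ^+ (asc s + (lastletter s < x)%N))); last first.
  move=> x; rewrite mem_iota => /andP [h _].
  rewrite /bwt last_rcons' max_rcons asc_rcons //.
  by rewrite (_ : maxn (maxletter s) x = x) ?eqxx //; lia.
rewrite mulrDr (key _ _ Hi).
rewrite {1}/bwt last_rcons' max_rcons asc_rcons // maxn0 ltn0 addn0 /zt.
case: Hi => _ _ _ _; case: eqP => [r0|rn] //=.
  by move/eqP => m0; rewrite r0 m0 ?eqxx !expr0; ring.
move=> _; rewrite eq_sym (_ : (maxletter s == 0)%N = false); [ring | exact/eqP].
Qed.

Lemma S3 k s (q w : R) : winv k s ->
  \sum_(x <- allowed s) (wt 1 q w (rcons s x) - bwt q w (rcons s x)) = wt 1 q w s - zt s.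
Proof.
move=> Hi; have sn := winv_ne Hi.
rewrite /allowed big_cons big1_seq; last first.
  move=> x /andP [_]; rewrite mem_iota => /andP [h _].
  rewrite /bwt /wt last_rcons' max_rcons asc_rcons //.
  by rewrite (_ : maxn (maxletter s) x = x) ?eqxx ?expr1n ?mul1r ?subrr //; lia.
rewrite /bwt /wt /zt last_rcons' max_rcons asc_rcons // maxn0 ltn0 addn0 !expr1n !mul1r addr0.
case: Hi => _ _ _ _; case: eqP => [r0|rn] //=.
  by move/eqP => m0; rewrite r0 m0 eqxx !expr0 mulr1.
by move=> _; rewrite eq_sym (_ : (maxletter s == 0)%N = false) //; exact/eqP.
Qed.

Lemma S4 k s : winv k s -> \sum_(x <- allowed s) zt (rcons s x) = zt s.
Proof.
move=> Hi; have sn := winv_ne Hi.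
rewrite /allowed big_cons big1_seq; last first.
  move=> x /andP [_]; rewrite mem_iota => /andP [h _].
  by rewrite /zt max_rcons (_ : maxn (maxletter s) x == 0 = false) //; lia.
by rewrite /zt max_rcons maxn0 addr0.
Qed.

Lemma transfer (F : seq nat -> R) k :
  \sum_(s <- Wl k.+1) F s = \sum_(s <- Wl k) \sum_(x <- allowed s) F (rcons s x).
Proof. by rewrite WlS big_allpairs_dep. Qed.

Lemma zsum k : \sum_(s <- Wl k) zt s = 1.
Proof.
elim: k => [|k IH]; first by rewrite /= big_seq1 /zt.
rewrite transfer -IH big_seq [RHS]big_seq; apply: eq_bigr => s /Wl_inv Hi.
exact: S4 Hi.
Qed.
End Alg.

Section Fin.
Variable R : fieldType.

Definition As k (u v w : R) := \sum_(s <- Wl k) wt u v w s.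
Definition Bs k (v w : R) := \sum_(s <- Wl k) bwt v w s.

Lemma Aeq k (u v w : R) : Acoef k.+1 u v w = As k u v w.
Proof. rewrite /Acoef /As -tuple_sum; apply: eq_bigr => t _; by []. Qed.

Lemma Beq k (v w : R) : Bcoef k.+1 v w = Bs k v w.
Proof.
rewrite /Bs -(tuple_sum k (bwt v w)) /Bcoef big_mkcond [RHS]big_mkcond.
apply: eq_bigr => t _; rewrite /valid /bwt.
by case: (is_ascent _); case: (avoids021 _); case: eqP.
Qed.

Lemma lin (s : seq (seq nat)) (a b c d z : seq nat -> R) (al be ga de : R) :
  \sum_(x <- s) (al * (a x + be * b x - z x) + ga * c x - de * d x) =
  al * (\sum_(x <- s) a x + be * \sum_(x <- s) b x - \sum_(x <- s) z x)
  + ga * \sum_(x <- s) c x - de * \sum_(x <- s) d x.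
Proof.
elim: s => [|x s IH]; first by rewrite !big_nil; ring.
rewrite !big_cons IH; ring.
Qed.

Lemma lin' (s : seq (seq nat)) (b c d : seq nat -> R) (al be ga de : R) :
  \sum_(x <- s) (al * (be * b x) + ga * c x - de * d x) =
  al * (be * \sum_(x <- s) b x) + ga * \sum_(x <- s) c x - de * \sum_(x <- s) d x.
Proof.
elim: s => [|x s IH]; first by rewrite !big_nil; ring.
rewrite !big_cons IH; ring.
Qed.

Lemma R1 k (u v w : R) :
  (1 - u * v) * As k.+1 u v w =
  (1 - u * v) * (As k 1 v w + (1 - w) * Bs k (u * v) w - 1) + w * As k 1 (u * v) w
   - (u * v) ^+ 2 * w * As k 1 1 (u * v * w).
Proof.
transitivity ((1 - u * v) * (As k 1 v w + (1 - w) * Bs k (u * v) w - \sum_(s <- Wl k) zt R s)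
   + w * As k 1 (u * v) w - (u * v) ^+ 2 * w * As k 1 1 (u * v * w)); last by rewrite zsum.
rewrite /As /Bs -lin /As transfer mulr_sumr big_seq [RHS]big_seq.
by apply: eq_bigr => s /Wl_inv Hi; apply: S1 Hi.
Qed.

Lemma R2 k (v w : R) :
  (1 - v) * Bs k.+1 v w =
  (1 - v) * ((1 - w) * Bs k v w) + w * As k 1 v w - v ^+ 2 * w * As k 1 1 (v * w).
Proof.
rewrite /As /Bs -lin' transfer mulr_sumr big_seq [RHS]big_seq.
apply: eq_bigr => s /Wl_inv Hi; rewrite (S2 _ _ Hi); ring.
Qed.

Lemma R3 k (q w : R) : As k.+1 1 q w - Bs k.+1 q w = As k 1 q w - 1.
Proof.
transitivity (As k 1 q w - \sum_(s <- Wl k) zt R s); last by rewrite zsum.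
rewrite /As /Bs -sumrB transfer -sumrB big_seq [RHS]big_seq.
by apply: eq_bigr => s /Wl_inv Hi; rewrite -(S3 _ _ Hi) sumrB.
Qed.

Lemma A0 (u v w : R) : As 0 u v w = 1.
Proof. by rewrite /As /= big_seq1 /wt /= !expr0 !mulr1. Qed.
Lemma B0 (v w : R) : Bs 0 v w = 1.
Proof. by rewrite /Bs /= big_seq1 /bwt /= !expr0 !mulr1. Qed.
End Fin.

Section PS.
Variable R : fieldType.
Implicit Types F G H : pser R.

Lemma addE F G n : ps_add F G n = F n + G n. Proof. by []. Qed.

Lemma mono_mul (c : R) j G n :
  ps_mul (ps_mono c j) G n = if (j <= n)%N then c * G (n - j)%N else 0.
Proof.
rewrite /ps_mul /ps_mono; case: leqP => H.
  have H' : (j < n.+1)%N by lia.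
  rewrite (bigD1 (Ordinal H')) //= eqxx big1 ?addr0 // => i ne.
  rewrite (_ : (nat_of_ord i == j) = false) ?mul0r //; apply/negbTE.
  by apply: contra ne => /eqP e; apply/eqP/val_inj.
rewrite big1 // => i _; rewrite (_ : (nat_of_ord i == j) = false) ?mul0r //.
have := ltn_ord i; lia.
Qed.

Lemma mulC F G n : ps_mul F G n = ps_mul G F n.
Proof.
rewrite /ps_mul (reindex_inj rev_ord_inj); apply: eq_bigr => i _.
have hi : (i <= n)%N by rewrite -ltnS ltn_ord.
by rewrite /= subSS subKn // mulrC.
Qed.

Lemma mul_add F G H n : ps_mul F (ps_add G H) n = ps_mul F G n + ps_mul F H n.
Proof. by rewrite /ps_mul -big_split /=; apply: eq_bigr => i _; rewrite mulrDr. Qed.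

Lemma add_mul F G H n : ps_mul (ps_add F G) H n = ps_mul F H n + ps_mul G H n.
Proof. by rewrite /ps_mul -big_split /=; apply: eq_bigr => i _; rewrite mulrDl. Qed.

Lemma inv_mono (c : R) j n : ps_mul (ps_inv1mx R) (ps_mono c j) n = if (j <= n)%N then c else 0.
Proof. by rewrite mulC mono_mul /ps_inv1mx mulr1. Qed.

Lemma fS (u v w : R) k : fser u v w k.+1 = As k u v w.
Proof. change (Acoef k.+1 u v w = As k u v w); exact: Aeq. Qed.
Lemma gS (v w : R) k : gser v w k.+1 = Bs k v w.
Proof. change (Bcoef k.+1 v w = Bs k v w); exact: Beq. Qed.

End PS.

Unset Implicit Arguments.
Theorem lemma3 (R : fieldType) (u v w : R) :
  (u * v != 1 ->
   forall n : nat,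
   fser u v w n =
   ps_add (ps_mul (ps_inv1mx R)
             (ps_add (ps_mono 1 1) (ps_add (ps_mono (-2) 2) (ps_mono (- w) 3))))
   (ps_add (ps_mul (ps_mono 1 1) (gser (u * v) w))
   (ps_add (ps_mul (ps_mono 1 1) (fser 1 v w))
   (ps_add (ps_mul (ps_add (ps_mono w 2) (ps_mono (u * v * w / (1 - u * v)) 1))
                   (fser 1 (u * v) w))
           (ps_mul (ps_mono (- (u ^+ 2 * v ^+ 2 * w / (1 - u * v))) 1)
                   (fser 1 1 (u * v * w)))))) n)
  /\
  (v != 1 ->
   forall n : nat,
   ps_mul (ps_1mx R) (gser v w) n =
   ps_add (ps_mul (ps_inv1mx R)
             (ps_add (ps_mono 1 1) (ps_add (ps_mono (-1) 2) (ps_mono (- w) 3))))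
   (ps_add (ps_mul (ps_add (ps_mono w 2) (ps_mono (v * w / (1 - v)) 1)) (fser 1 v w))
           (ps_mul (ps_mono (- (v ^+ 2 * w / (1 - v))) 1) (fser 1 1 (v * w)))) n).
Proof.
split.
  move=> quv n; have hq : 1 - u * v != 0 by rewrite subr_eq0 eq_sym.
  rewrite !(addE, mul_add, add_mul, mono_mul, inv_mono).
  case: n => [|[|[|k]]] /=.
  - by rewrite !addr0.
  - rewrite Aeq A0; ring.
  - rewrite !subSS !subn0 !Aeq !Beq; apply: (mulfI hq); rewrite R1 !A0 !B0; field; exact: hq.
  - rewrite !subSS !subn0 !Aeq !Beq.
    have E := R3 k (u * v) w.
    have -> : As k 1 (u * v) w = As k.+1 1 (u * v) w - Bs k.+1 (u * v) w + 1 by rewrite E; ring.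
    apply: (mulfI hq); rewrite R1; field; exact: hq.
move=> v1 n; have hv : 1 - v != 0 by rewrite subr_eq0 eq_sym.
rewrite /ps_1mx !(addE, mul_add, add_mul, mono_mul, inv_mono).
case: n => [|[|[|k]]] /=.
- by rewrite mulr0 !addr0.
- by rewrite !subn0 Beq B0; ring.
- rewrite !subSS !subn0 !Aeq !Beq.
  have E2 : Bs 1 v w = ((1 - v) * ((1 - w) * Bs 0 v w) + w * As 0 1 v w - v ^+ 2 * w * As 0 1 1 (v * w)) / (1 - v)
    by rewrite -R2; field; exact: hv.
  rewrite E2 !A0 !B0; field; exact: hv.
- rewrite !subSS !subn0 !Aeq !Beq.
  have E := R3 k v w.
  have -> : As k 1 v w = As k.+1 1 v w - Bs k.+1 v w + 1 by rewrite E; ring.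
  have E2 : Bs k.+2 v w = ((1 - v) * ((1 - w) * Bs k.+1 v w) + w * As k.+1 1 v w - v ^+ 2 * w * As k.+1 1 1 (v * w)) / (1 - v)
    by rewrite -R2; field; exact: hv.
  rewrite E2; field; exact: hv.
Qed.
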